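(* Let $G$ be a connected graph on $5$ vertices. Then $q(G)=2$ if and only if $G$ contains a (not necessarily induced) spanning subgraph isomorphic to the single-ended candle $G'_2$.
   Context: For a graph $G$ on $n$ vertices, $\mathcal{S}(G)$ is the set of real symmetric $n\times n$ matrices $A=[a_{ij}]$ with $a_{ij}\neq0$ for $i\ne j$ iff $\{i,j\}\in E(G)$ (diagonal unrestricted); $q(G)$ is the minimum number of distinct eigenvalues of a matrix in $\mathcal{S}(G)$. $G'_2$ is the graph on $\{1,2,3,4,5\}$ with edges $12,13,24,25,34,35,45$ (7 edges). *)

(* Defs.v *)
From HB Require Import structures.
From mathcomp Require Import all_boot all_order all_algebra all_fingroup.
From mathcomp Require Import reals.
Set Implicit Arguments. Unset Strict Implicit. Unset Printing Implicit Defensive.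
Import Order.TTheory GRing.Theory Num.Theory.
Local Open Scope ring_scope.

Definition simple_graph (n : nat) (G : rel 'I_n) : Prop :=
  symmetric G /\ irreflexive G.

Definition connected_graph (n : nat) (G : rel 'I_n) : Prop :=
  forall i j : 'I_n, connect G i j.

Definition in_S (R : realType) (n : nat) (G : rel 'I_n) (A : 'M[R]_n) : Prop :=
  A^T = A /\ forall i j : 'I_n, i != j -> (A i j != 0) = G i j.

Definition num_distinct_eig (R : realType) (n : nat) (A : 'M[R]_n) (k : nat)
  : Prop :=
  exists s : seq R, [/\ uniq s, size s = k & forall a : R, (a \in s) = eigenvalue A a].

Definition q_eq (R : realType) (n : nat) (G : rel 'I_n) (k : nat) : Prop :=
  (exists A : 'M[R]_n, in_S G A /\ num_distinct_eig A k) /\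
  (forall (A : 'M[R]_n) (m : nat), in_S G A -> num_distinct_eig A m -> (k <= m)%N).

(* The single-ended candle G'_2 on vertices 0..4 (paper's 1..5 shifted by one):
   edges 01,02,13,14,23,24,34. *)
Definition candle_edges : seq (nat * nat) :=
  [:: (0,1); (0,2); (1,3); (1,4); (2,3); (2,4); (3,4)]%N.

Definition G2' : rel 'I_5 :=
  fun i j => ((val i, val j) \in candle_edges) || ((val j, val i) \in candle_edges).

Definition has_spanning_copy (n : nat) (H G : rel 'I_n) : Prop :=
  exists p : 'S_n, forall i j : 'I_n, H i j -> G (p i) (p j).

(* Main.v *)
Require Import Defs.
From mathcomp Require Import all_boot all_order all_algebra all_fingroup.
From mathcomp Require Import reals.
From mathcomp Require Import spectral sesquilinear mxred ring lra.
From mathcomp.real_closed Require Import complex.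
Set Implicit Arguments. Unset Strict Implicit. Unset Printing Implicit Defensive.
Import Order.TTheory GRing.Theory Num.Theory.

Definition pairs10 : seq (nat * nat) :=
  [:: (0,1); (0,2); (0,3); (0,4); (1,2); (1,3); (1,4); (2,3); (2,4); (3,4)].
Definition gn (b : seq bool) (i j : nat) : bool :=
  if i == j then false else nth false b (index (minn i j, maxn i j) pairs10).
Definition cedges := candle_edges.
Definition allbits (n : nat) : seq (seq bool) :=
  iter n (fun L => [seq true :: l | l <- L] ++ [seq false :: l | l <- L]) [:: [::]].
Definition I5 := iota 0 5.
Definition crosses (b S : seq bool) :=
  has (fun i => has (fun j => nth false S i && ~~ nth false S j && gn b i j) I5) I5.
Definition cutfree (b : seq bool) :=
  all (fun S => if has id S then (if all id S then true else crosses b S) else true) (allbits 5).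
Definition cand_ok (b : seq bool) :=
  has (fun l => all (fun e => gn b (nth 0 l e.1) (nth 0 l e.2)) cedges) (permutations I5).
Definition bad_ok (b : seq bool) :=
  has (fun u => has (fun v => has (fun w =>
    [&& u != v, ~~ gn b u v, gn b u w, gn b w v &
     all (fun k => (k == w) || ~~ (gn b u k && gn b k v)) I5]) I5) I5) I5.
Definition pair_ok (b : seq bool) (x y d e : nat) :=
  [&& ~~ gn b x y, gn b x d, gn b x e &
     all (fun k => (k == d) || (k == e) || ~~ (gn b x k && gn b k y)) I5].
Definition k23_ok (b : seq bool) :=
  has (fun a => has (fun a' => has (fun a'' => has (fun d => has (fun e =>
    if (a < a') then if (a' < a'') then if d < e then
    if pair_ok b a a' d e then if pair_ok b a a'' d e then
    if pair_ok b a' a'' d e then gn b a'' d && gn b a'' e else false else false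
    else false else false else false else false) I5) I5) I5) I5) I5.
Definition ok (b : seq bool) :=
  if cutfree b then (if cand_ok b then true else if bad_ok b then true else k23_ok b) else true.
Lemma all_ok : all ok (allbits 10).
Proof. vm_compute. reflexivity. Qed.

Lemma allbits_size n b : b \in allbits n -> size b = n.
Proof.
elim: n b => [|n IH] b /=; first by rewrite inE => /eqP ->.
by rewrite mem_cat => /orP [] /mapP [l /IH hl ->] /=; rewrite hl.
Qed.

Lemma allbitsP n b : size b = n -> b \in allbits n.
Proof.
elim: n b => [|n IH] [|x b] //= [hb]; rewrite mem_cat.
by case: x; [rewrite map_f // IH | rewrite orbC map_f // IH].
Qed.

Definition bitsOf (G : rel 'I_5) : seq bool :=
  [seq G (inord p.1) (inord p.2) | p <- pairs10].

Lemma bitsOf_size G : size (bitsOf G) = 10.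
Proof. by rewrite size_map. Qed.

Lemma bitsOfP (G : rel 'I_5) : symmetric G -> irreflexive G ->
  forall i j : 'I_5, G i j = gn (bitsOf G) i j.
Proof.
move=> sG iG i j; rewrite -(inord_val i) -(inord_val j).
case: i j => [[|[|[|[|[|i]]]]] Hi] [[|[|[|[|[|j]]]]] Hj] //=;
  rewrite /gn !inordK //= ?iG //; rewrite sG //.
Qed.

Lemma gn_sym b i j : gn b i j = gn b j i.
Proof. by rewrite /gn eq_sym minnC maxnC. Qed.

Lemma connect_cross (T : finType) (e : rel T) (P : pred T) x y :
  connect e x y -> P x -> ~~ P y -> exists u v, [/\ e u v, P u & ~~ P v].
Proof.
move/connectP => [p]; elim: p x => [|z p IH] x /=.
  by move=> _ -> ->.
move=> /andP [exz pz] hy Px; case Pz: (P z).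
  exact: (IH z pz hy Pz).
by exists x, z; rewrite Pz.
Qed.

Lemma cut_sound (G : rel 'I_5) b : connected_graph G ->
  (forall i j : 'I_5, G i j = gn b i j) -> cutfree b.
Proof.
move=> cG HG; apply/allP => S hS5; have s5 := allbits_size hS5.
case: ifP => // /hasP [x xS /= xt]; case: ifP => // /negbT.
rewrite -has_predC => /hasP [y yS /= yf].
have ix : (index x S < 5)%N by rewrite -s5 index_mem.
have iy : (index y S < 5)%N by rewrite -s5 index_mem.
have := connect_cross (P := fun z : 'I_5 => nth false S z) (cG (Ordinal ix) (Ordinal iy)).
rewrite /= !nth_index // xt yf => /(_ isT isT) [u [v [euv Su Sv]]].
apply/hasP; exists (val u); first by rewrite mem_iota /=.
apply/hasP; exists (val v); first by rewrite mem_iota /=.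
by rewrite Su Sv -HG.
Qed.

Lemma cand_sound (G : rel 'I_5) b :
  (forall i j : 'I_5, G i j = gn b i j) -> cand_ok b -> has_spanning_copy G2' G.
Proof.
move=> HG /hasP [l]; rewrite mem_permutations => pl /allP hl.
have sl : size l = 5 by rewrite (perm_size pl).
have ul : uniq l by rewrite (perm_uniq pl) // iota_uniq.
have lt5 : forall i : 'I_5, (nth 0 l i < 5)%N.
  move=> i; have : nth 0 l i \in l by rewrite mem_nth // sl.
  by rewrite (perm_mem pl) mem_iota.
pose f := fun i : 'I_5 => (inord (nth 0 l i) : 'I_5).
have finj : injective f.
  move=> i j /(congr1 val); rewrite /f /= !inordK // => /eqP.
  rewrite nth_uniq ?sl // => /eqP; exact: val_inj.
exists (perm finj) => i j; rewrite /G2' !permE HG /f /= !inordK //.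
case/orP => He; first exact: (hl _ He).
by rewrite gn_sym; exact: (hl _ He).
Qed.

Local Open Scope ring_scope.

Lemma real_Cre (R : rcfType) (x : R[i]) : x \is Num.real -> x = (complex.Re x)%:C%C.
Proof.
case: x => a b; rewrite realE !lecE /= => /orP[]/andP[/eqP Hb _]; 
  by apply/eqP; rewrite eq_complex /= eqxx /= ?Hb.
Qed.

Lemma sym_eig_poly (R : realType) n (A : 'M[R]_n.+1) (s : seq R) :
  A^T = A -> (forall a, (a \in s) = eigenvalue A a) ->
  horner_mx A (\prod_(l <- s) ('X - l%:P)) = 0.
Proof.
move=> AT Hs.
set p := \prod_(l <- s) _.
pose f := real_complex R.
set Ac := map_mx f A.
have Ah : Ac \is hermsymmx.
  apply: realsym_hermsym.
    apply/is_hermitianmxP; rewrite expr0 scale1r.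
    by apply/matrixP => i j; rewrite !mxE -[in RHS]AT mxE.
  apply/mxOverP => i j; rewrite mxE realE /f ler0c.
  have -> : ((A i j)%:C%C <= 0) = (A i j <= 0) by rewrite -(lecR (A i j) 0).
  by rewrite -realE num_real.
move/hermitian_normalmx/orthomx_spectralP: (Ah) => HAc.
have Hd := hermitian_spectral_diag_real Ah.
set P := spectralmx Ac in HAc.
set d := spectral_diag Ac in HAc Hd.
have Pu : P \in unitmx := spectral_unit Ac.
have key : forall k, (map_poly f p).[d 0 k] = 0.
  move=> k.
  have rk : d 0 k = f (complex.Re (d 0 k)) by apply: real_Cre; apply: (mxOverP Hd).
  rewrite rk horner_map /=.
  have : root p (complex.Re (d 0 k)).
    rewrite root_prod_XsubC Hs -(eigenvalue_map f).
    suff Heig : eigenvalue Ac (d 0 k) by move: Heig; rewrite {1}rk.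
    apply/eigenvalueP; exists (delta_mx 0 k *m P).
      rewrite {1}HAc !mulmxA mulmxK //.
      have -> : (delta_mx (0:'I_1) k : 'rV[R[i]]_n.+1) *m diag_mx d = d 0 k *: delta_mx 0 k.
        apply/matrixP => i j; rewrite !mxE (bigD1 k) //= big1 ?addr0.
          rewrite !mxE eqxx /=; case: (k =P j) => [->|/eqP nkj].
            by rewrite eqxx mulr1n mulrC.
          by rewrite mulr0n mulr0 [j == k]eq_sym (negPf nkj) andbF mulr0.
        by move=> l /negPf nlk; rewrite !mxE nlk andbF mul0r.
      by rewrite scalemxAl.
    apply/negP => /eqP H0.
    have : delta_mx (0:'I_1) k *m P *m invmx P = 0 by rewrite H0 mul0mx.
    rewrite mulmxK // => /matrixP /(_ 0 k); rewrite !mxE !eqxx /= => /eqP.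
    by rewrite oner_eq0.
  by rewrite /root => /eqP ->; rewrite rmorph0.
have H0 : horner_mx Ac (map_poly f p) = 0.
  have Pu' : P \is a GRing.unit by [].
  rewrite HAc horner_mx_uconjC // horner_mx_diag.
  have -> : map_mx (horner (map_poly f p)) d = 0.
    by apply/matrixP => i j; rewrite !mxE ord1 key.
  by rewrite linear0 mulmx0 mul0mx.
move: H0; rewrite -map_horner_mx => /eqP; rewrite map_mx_eq0 => /eqP //.
Qed.

Section Sound.
Variable R : realType.
Variable G : rel 'I_5.
Variable b : seq bool.
Hypothesis HG : forall i j : 'I_5, G i j = gn b i j.
Variable A : 'M[R]_5.
Hypothesis hA0 : forall i j : 'I_5, i != j -> ~~ G i j -> A i j = 0.
Hypothesis hAnz : forall i j : 'I_5, G i j -> A i j != 0.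
Hypothesis hAsym : forall i j : 'I_5, A i j = A j i.
Hypothesis Z : forall u v : 'I_5, u != v -> ~~ G u v ->
  \sum_k A u k * A k v = 0.

Lemma prod0 (i j k : 'I_5) : i != j -> ~~ G i j -> ~~ (G i k && G k j) ->
  A i k * A k j = 0.
Proof.
move=> nij nG; case Gik: (G i k) => /= nGkj.
  have [ekj|nekj] := eqVneq k j.
    by rewrite ekj (hA0 nij nG) mul0r.
  by rewrite (hA0 nekj nGkj) mulr0.
have [eki|neki] := eqVneq k i.
  by rewrite eki (hA0 nij nG) mulr0.
by rewrite (hA0 (i:=i) (j:=k)) ?mul0r // ?Gik // eq_sym.
Qed.

Lemma inordv (u : nat) : (u < 5)%N -> val (inord u : 'I_5) = u.
Proof. exact: inordK. Qed.

Lemma GE (u v : nat) : (u < 5)%N -> (v < 5)%N ->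
  G (inord u) (inord v) = gn b u v.
Proof. by move=> hu hv; rewrite HG !inordK. Qed.

Lemma bad_sound : bad_ok b -> False.
Proof.
move/hasP => [u]; rewrite mem_iota => /andP [_ hu] /hasP [v].
rewrite mem_iota => /andP [_ hv] /hasP [w]; rewrite mem_iota => /andP [_ hw].
move=> /and5P [huv nuv huw hwv /allP hk].
set U := (inord u : 'I_5); set V := (inord v : 'I_5); set W := (inord w : 'I_5).
have nUV : U != V.
  by apply: contra huv => /eqP/(congr1 val); rewrite /= !inordK // => ->.
have nGUV : ~~ G U V by rewrite GE.
have := Z nUV nGUV; rewrite (bigD1 W) //= big1 ?addr0.
  by apply/eqP; rewrite mulf_neq0 // hAnz // GE.
move=> k nkW; apply: prod0 => //.
have := hk (val k); rewrite mem_iota /= ltn_ord => /(_ isT) /orP [/eqP ekw|].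
  by move: nkW; rewrite -(inj_eq val_inj) /= inordK // ekw eqxx.
by rewrite !HG !inordK.
Qed.

Lemma pair_sound (x y d e : nat) : (x < 5)%N -> (y < 5)%N -> (d < 5)%N -> (e < 5)%N ->
  x != y -> d != e -> pair_ok b x y d e ->
  A (inord x) (inord d) * A (inord d) (inord y) +
  A (inord x) (inord e) * A (inord e) (inord y) = 0.
Proof.
move=> hx hy hd he nxy nde /and4P [nG Gxd Gxe /allP hk].
have nXY : (inord x : 'I_5) != inord y.
  by apply: contra nxy => /eqP/(congr1 val); rewrite /= !inordK // => ->.
have nDE : (inord d : 'I_5) != inord e.
  by apply: contra nde => /eqP/(congr1 val); rewrite /= !inordK // => ->.
have nGXY : ~~ G (inord x) (inord y) by rewrite GE.
have := Z nXY nGXY.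
rewrite (bigD1 (inord d)) //= (bigD1 (inord e)) 1?eq_sym //= big1 ?addr0 //.
move=> k /andP [nkd nke]; apply: prod0 => //.
have := hk (val k); rewrite mem_iota /= ltn_ord => /(_ isT) /orP [/orP [/eqP ekd|/eqP eke]|].
- by move: nkd; rewrite -(inj_eq val_inj) /= inordK // ekd eqxx.
- by move: nke; rewrite -(inj_eq val_inj) /= inordK // eke eqxx.
by rewrite !HG !inordK.
Qed.

Lemma three_contra (pa pb pc qa qb qc : R) :
  pa != 0 -> pb != 0 -> pc != 0 ->
  pa * pb + qa * qb = 0 -> pa * pc + qa * qc = 0 -> pb * pc + qb * qc = 0 -> False.
Proof.
move=> na nb nc e1 e2 e3.
have h1 : pa * pb = - (qa * qb) by apply/eqP; rewrite -subr_eq0 opprK e1.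
have h2 : pa * pc = - (qa * qc) by apply/eqP; rewrite -subr_eq0 opprK e2.
have h3 : pb * pc = - (qb * qc) by apply/eqP; rewrite -subr_eq0 opprK e3.
have : (pa * pb * pc) ^+ 2 = - (qa * qb * qc) ^+ 2.
  have -> : (pa * pb * pc) ^+ 2 = (pa * pb) * (pa * pc) * (pb * pc).
    by rewrite expr2; ring.
  rewrite h1 h2 h3 expr2; ring.
move=> hPQ.
have hp : 0 < (pa * pb * pc) ^+ 2.
  by rewrite lt0r sqr_ge0 andbT sqrf_eq0 !mulf_neq0.
have hq : 0 <= (qa * qb * qc) ^+ 2 by rewrite sqr_ge0.
move: hp hq; rewrite hPQ; lra.
Qed.

Lemma k23_sound : k23_ok b -> False.
Proof.
move/hasP => [a]; rewrite mem_iota => /andP [_ ha] /hasP [a'].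
rewrite mem_iota => /andP [_ ha'] /hasP [a'']; rewrite mem_iota => /andP [_ ha''].
move/hasP => [d]; rewrite mem_iota => /andP [_ hd] /hasP [e].
rewrite mem_iota => /andP [_ he].
case: ifP => // l1; case: ifP => // l2; case: ifP => // l3.
case: ifP => // P1; case: ifP => // P2; case: ifP => // P3 /andP [G1 G2].
have dne : d != e by rewrite neq_ltn l3.
have n12 : a != a' by rewrite neq_ltn l1.
have n13 : a != a'' by rewrite neq_ltn (ltn_trans l1 l2).
have n23 : a' != a'' by rewrite neq_ltn l2.
have e1 := pair_sound ha ha' hd he n12 dne P1.
have e2 := pair_sound ha ha'' hd he n13 dne P2.
have e3 := pair_sound ha' ha'' hd he n23 dne P3.
rewrite [A (inord d) _]hAsym [A (inord e) _]hAsym in e1.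
rewrite [A (inord d) _]hAsym [A (inord e) _]hAsym in e2.
rewrite [A (inord d) _]hAsym [A (inord e) _]hAsym in e3.
move: P1 P2 => /and4P [_ Gad _ _] /and4P [_ _ _ _].
move: P3 => /and4P [_ Ga'd _ _].
apply: (three_contra _ _ _ e1 e2 e3); apply: hAnz; rewrite GE //.
Qed.
End Sound.

Lemma nz_row (R : ringType) m n (M : 'M[R]_(m, n)) : M != 0 -> exists i, row i M != 0.
Proof.
move=> nM; apply/existsP; apply: contraR nM; rewrite negb_exists => /forallP H.
by apply/eqP/row_matrixP => i; rewrite row0; apply/eqP; move: (H i); rewrite negbK.
Qed.

Lemma two_eig (R : realType) (A : 'M[R]_5) c : c != 0 -> A *m A = c *: A ->
  A != 0 -> A != c%:M -> num_distinct_eig A 2.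
Proof.
move=> nc AA nA0 nAc; exists [:: 0; c]; split => //=.
  by rewrite inE eq_sym nc.
move=> a; apply/idP/idP.
- rewrite !inE => /orP [/eqP->|/eqP->].
  + have : A - c%:M != 0 by rewrite subr_eq0.
    move/nz_row => [i hi]; apply/eigenvalueP; exists (row i (A - c%:M)) => //.
    by rewrite -row_mul mulmxBl AA mul_scalar_mx subrr row0 scale0r.
  + move/nz_row: nA0 => [i hi]; apply/eigenvalueP; exists (row i A) => //.
    by rewrite -row_mul AA; apply/rowP => j; rewrite !mxE.
- move/eigenvalueP => [v hv vnz].
  have h1 : v *m A *m A = (a * a) *: v by rewrite hv -scalemxAl hv scalerA.
  have h2 : v *m A *m A = (c * a) *: v by rewrite -mulmxA AA -scalemxAr hv scalerA.
  have : (a * a - c * a) *: v = 0 by rewrite scalerBl -h1 -h2 subrr.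
  move/eqP; rewrite scaler_eq0 (negPf vnz) orbF -mulrBl mulf_eq0 subr_eq0.
  by rewrite !inE orbC.
Qed.

Lemma hmx2 (R : comRingType) n (A : 'M[R]_n.+1) l1 l2 :
  horner_mx A (\prod_(l <- [:: l1; l2]) ('X - l%:P)) = (A - l1%:M) *m (A - l2%:M).
Proof.
by rewrite !big_cons big_nil mulr1 rmorphM /= !rmorphB /= horner_mx_X !horner_mx_C mulmxE.
Qed.

Lemma hmx1 (R : comRingType) n (A : 'M[R]_n.+1) l :
  horner_mx A (\prod_(l <- [:: l]) ('X - l%:P)) = (A - l%:M).
Proof.
by rewrite !big_cons big_nil mulr1 !rmorphB /= horner_mx_X !horner_mx_C.
Qed.

Lemma hmx0 (R : comRingType) n (A : 'M[R]_n.+1) :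
  horner_mx A (\prod_(l <- [::]) ('X - l%:P)) = 1.
Proof. by rewrite big_nil rmorph1. Qed.

Lemma entry2 (R : comRingType) n (A : 'M[R]_n) l1 l2 (u v : 'I_n) :
  u != v -> A u v = 0 ->
  ((A - l1%:M) *m (A - l2%:M)) u v = \sum_k A u k * A k v.
Proof.
move=> nuv Auv.
rewrite mulmxBl !mulmxBr mul_mx_scalar mul_scalar_mx -scalar_mxM !mxE Auv (negPf nuv).
by rewrite !mulr0 mulr0n !subr0; apply: eq_bigr => k _.
Qed.

Definition isum (f : nat -> int) : int := foldr (fun k acc => f k + acc) 0 I5.
Definition ent (xs ys : seq int) (i j : nat) : int :=
  nth 0 xs i * nth 0 xs j + nth 0 ys i * nth 0 ys j.
Definition sums_ok (xs ys : seq int) (c : int) :=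
  [&& isum (fun k => nth 0 xs k * nth 0 xs k) == c,
      isum (fun k => nth 0 ys k * nth 0 ys k) == c &
      isum (fun k => nth 0 xs k * nth 0 ys k) == 0].
Definition patok (xs ys : seq int) (bl : seq bool) :=
  all (fun i => all (fun j => (i == j) || ((ent xs ys i j != 0) == gn bl i j)) I5) I5.

Lemma sum5 (R : comRingType) (f : nat -> int) :
  \sum_(k < 5) ((f k)%:~R : R) = (isum f)%:~R.
Proof.
by rewrite !big_ord_recl big_ord0 /isum /= !rmorphD /= addr0.
Qed.

Lemma build (R : realType) (G : rel 'I_5) (p : 'S_5) xs ys (c : int) bl (u w : 'I_5) :
  (forall i j, G (p i) (p j) = gn bl i j) -> c != 0 -> sums_ok xs ys c ->
  patok xs ys bl -> u != w -> G u w ->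
  exists A : 'M[R]_5, in_S G A /\ num_distinct_eig A 2.
Proof.
move=> HH nc /and3P [/eqP sx /eqP sy /eqP sxy] pat nuw Guw.
pose q := p^-1%g.
pose X : 'cV[R]_5 := \col_i (nth 0 xs (q i))%:~R.
pose Y : 'cV[R]_5 := \col_i (nth 0 ys (q i))%:~R.
pose A := X *m X^T + Y *m Y^T.
have Aij : forall i j, A i j = (ent xs ys (q i) (q j))%:~R.
  by move=> i j; rewrite !mxE !big_ord1 !mxE /ent rmorphD !rmorphM.
have dot : forall (zs ts : seq int),
    \sum_(k < 5) ((nth 0 zs (q k))%:~R * (nth 0 ts (q k))%:~R : R) =
    (isum (fun k => nth 0 zs k * nth 0 ts k))%:~R.
  move=> zs ts; rewrite (reindex_inj (@perm_inj _ p)) /= -sum5.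
  by apply: eq_bigr => k _; rewrite /q permK rmorphM.
have XX : X^T *m X = (c%:~R)%:M.
  apply/matrixP => i j; rewrite !ord1 !mxE eqxx mulr1n -sx -dot.
  under eq_bigr do rewrite !mxE. reflexivity.
have YY : Y^T *m Y = (c%:~R)%:M.
  apply/matrixP => i j; rewrite !ord1 !mxE eqxx mulr1n -sy -dot.
  under eq_bigr do rewrite !mxE. reflexivity.
have XY : X^T *m Y = 0.
  apply/matrixP => i j; rewrite !ord1 [RHS]mxE.
  have -> : (0:R) = (0:int)%:~R by [].
  rewrite -sxy -dot !mxE.
  under eq_bigr do rewrite !mxE. reflexivity.
have YX : Y^T *m X = 0 by rewrite -[Y^T *m X]trmxK trmx_mul trmxK XY trmx0.
have E : forall (U V W Z : 'cV[R]_5), U *m V^T *m (W *m Z^T) = U *m (V^T *m W) *m Z^T.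
  by move=> *; rewrite !mulmxA.
have AA : A *m A = (c%:~R) *: A.
  rewrite /A mulmxDl !mulmxDr !E XX YY XY YX !mulmx0 !mul0mx addr0 add0r.
  by rewrite !mul_mx_scalar -!scalemxAl scalerDr.
have inS : in_S G A.
  split.
    by rewrite /A linearD /= !trmx_mul !trmxK.
  move=> i j nij; rewrite Aij intr_eq0.
  have qij : q i != q j by rewrite (inj_eq (@perm_inj _ q)).
  have mi : forall k : 'I_5, (val k : nat) \in I5 by move=> k; rewrite mem_iota /= ltn_ord.
  have := allP pat (q i) (mi _).
  move=> /allP /(_ (q j) (mi _)).
  have qij' : (nat_of_ord (q i) == nat_of_ord (q j)) = false.
    by apply/negbTE; rewrite (inj_eq val_inj).
  rewrite qij' /= => /eqP ->.
  by rewrite -HH /q !permKV.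
exists A; split => //.
have Auw : A u w != 0 by case: inS => _ ->.
apply: (two_eig (c := c%:~R)) => //.
- by rewrite intr_eq0.
- by apply: contraNneq Auw => ->; rewrite mxE.
- by apply: contraNneq Auw => ->; rewrite mxE (negPf nuw) mulr0n.
Qed.

Theorem mainTheorem14 (R : realType) (G : rel 'I_5) :
  simple_graph G -> connected_graph G ->
  (q_eq R G 2 <-> has_spanning_copy G2' G).
Proof.
move=> [sG iG] cG.
have [w Gw] : exists w, G ord0 w.
  have := cG ord0 (inord 1); move/connectP => [[|z p]] /=.
    by move=> _ /(congr1 (@nat_of_ord 5)); rewrite inordK.
  by move=> /andP [h _] _; exists z.
have n0w : ord0 != w by apply: contraTneq Gw => <-; rewrite iG.
have HG := bitsOfP sG iG.
have okb := allP all_ok _ (allbitsP (bitsOf_size G)).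
have cf := cut_sound cG HG.
split.
- move=> [[A [[AT hA] [s [us ss Hs]]]] _].
  case: s us ss Hs => [|l1 [|l2 [|]]] //= us _ Hs.
  have H0 := sym_eig_poly AT Hs; rewrite hmx2 in H0.
  have hA0 : forall i j : 'I_5, i != j -> ~~ G i j -> A i j = 0.
    by move=> i j nij nG; apply/eqP; move: (hA i j nij); rewrite (negPf nG) => /negbFE.
  have hAnz : forall i j : 'I_5, G i j -> A i j != 0.
    move=> i j Gij; have nij : i != j by apply: contraTneq Gij => ->; rewrite iG.
    by rewrite hA.
  have hAsym : forall i j : 'I_5, A i j = A j i.
    by move=> i j; rewrite -[in LHS]AT mxE.
  have Z : forall u v : 'I_5, u != v -> ~~ G u v -> \sum_k A u k * A k v = 0.
    move=> u v nuv nG; rewrite -(entry2 l1 l2 nuv (hA0 _ _ nuv nG)) H0.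
    by rewrite mxE.
  move: okb; rewrite /ok cf; case: ifP => [cand _|_]; first exact: cand_sound HG cand.
  case: ifP => [bad _|_ k23]; exfalso.
    exact: (@bad_sound R G _ HG A hA0 hAnz Z bad).
  exact: (@k23_sound R G _ HG A hA0 hAnz hAsym Z k23).
- move=> [p hp].
  pose H := fun i j => G (p i) (p j).
  have sH : symmetric H by move=> i j; rewrite /H sG.
  have iH : irreflexive H by move=> i; rewrite /H iG.
  have HH := bitsOfP sH iH.
  have C : forall a c : nat, (a < 5)%N -> (c < 5)%N -> ((a, c) \in candle_edges) ->
      H (inord a) (inord c).
    by move=> a c ha hc e; apply: hp; rewrite /G2' /= !inordK // e.
  have Hb : bitsOf H = [:: true; true; H (inord 0) (inord 3); H (inord 0) (inord 4);
       H (inord 1) (inord 2); true; true; true; true; true].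
    by rewrite /bitsOf /= (C 0 1) ?(C 0 2) ?(C 1 3) ?(C 1 4) ?(C 2 3) ?(C 2 4) ?(C 3 4).
  have HHb : forall i j, G (p i) (p j) = gn (bitsOf H) i j by move=> i j; rewrite -HH.
  rewrite Hb in HHb.
  split.
    move: HHb; case: (H (inord 0) (inord 3)); case: (H (inord 0) (inord 4));
      case: (H (inord 1) (inord 2)) => HHb.
    + by apply: (@build R G p [:: 2; -2; 2; -2; 1] [:: -2; 0; 3; 0; -2] 17 _ ord0 w HHb).
    + by apply: (@build R G p [:: -2; 0; 2; -2; -1] [:: -2; 2; 0; 1; 2] 13 _ ord0 w HHb).
    + by apply: (@build R G p [:: 1; 0; 3; 0; -2] [:: 1; 2; 1; -2; 2] 14 _ ord0 w HHb).
    + by apply: (@build R G p [:: -2; 1; 0; -3; -1] [:: 2; 0; 3; -1; -1] 15 _ ord0 w HHb).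
    + by apply: (@build R G p [:: 2; 2; -2; -3; -1] [:: 3; 1; 2; 2; -2] 22 _ ord0 w HHb).
    + by apply: (@build R G p [:: 1; 1; 0; -2; 3] [:: -1; 0; 3; -2; -1] 15 _ ord0 w HHb).
    + by apply: (@build R G p [:: 2; -2; 2; 0; 0] [:: 0; 1; 1; 3; -1] 12 _ ord0 w HHb).
    + by apply: (@build R G p [:: 5; 1; 1; 0; 0] [:: 0; 1; -1; 3; 4] 27 _ ord0 w HHb).
  move=> A m [AT hA] [s [us ss Hs]].
  case: s us ss Hs => [|l1 [|l2 s']] //= us <- Hs; last by [].
    have := sym_eig_poly AT Hs; rewrite hmx0 => /eqP; by rewrite oner_eq0.
  have := sym_eig_poly AT Hs; rewrite hmx1 => /matrixP /(_ ord0 w).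
  rewrite !mxE (negPf n0w) mulr0n subr0 => A0.
  by have := hA ord0 w n0w; rewrite A0 eqxx Gw.
Qed.
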